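(* Consider the error system with adaptive control $u_{\mathrm{adapt}}=-\hat W^\top\beta(e)$ and static update law $\hat W(t)=K\beta(e(t))B^\top Pe(t)$, where $K=\alpha K_{\mathrm b}$ with $\alpha>0$ and $0<K_{\mathrm b}\in\mathrm S^{n_\beta}$, and $0<P,Q\in\mathrm S^n$ satisfy $Q=-(A^\top P+PA)$. Assume $\mathscr b:=\inf_{x\in\mathbb R^n}\beta(x)^\top K_{\mathrm b}\beta(x)>0$ and $|\eta(t)|\le\eta^\star$ for all $t\ge0$. Let $\gamma\in[0,1)$ and $\mu>0$, and define $$r_{\mathrm e}=\sqrt{\frac{\lambda_{\max}(P)}{g(\alpha\mathscr b\gamma,Q,PB)\,\lambda_{\min}(P)}}\;\sqrt{\frac{W^\top K_{\mathrm b}^{-1}W+\frac{{\eta^\star}^2}{\mathscr b(1-\gamma)}}{\alpha}+\mu}.$$ Then for every closed-loop solution there exists $T_{\mathrm e}\ge0$ such that $\|e(t)\|\le r_{\mathrm e}$ for all $t\ge T_{\mathrm e}$.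
   Context: Error system: $\dot e=Ae+B(u_{\mathrm{adapt}}+W^\top\beta(e)+\eta)$ with $e(t)\in\mathbb R^n$, $A\in\mathbb R^{n\times n}$ Hurwitz, $B\in\mathbb R^n$, $\beta:\mathbb R^n\to\mathbb R^{n_\beta}$ known, $W\in\mathbb R^{n_\beta}$ unknown constant, $\eta(t)\in\mathbb R$; Assumption 1: there is a non-decreasing $\alpha_\beta:[0,\infty)\to[0,\infty)$ with $\|\beta(x)\|\le\alpha_\beta(\|x\|)$ for all $x$. Closed-loop solutions are assumed to exist on $[0,\infty)$. $\mathrm S^k$: real symmetric $k\times k$ matrices. $g(\phi,Q,v)=\lambda_{\min}(Q+\phi\,vv^\top)$. *)

(* Defs.v *)
From HB Require Import structures.
From mathcomp Require Import all_boot all_order all_algebra.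
From mathcomp Require Import all_classical all_reals all_analysis.
From mathcomp Require Import complex.
Set Implicit Arguments. Unset Strict Implicit. Unset Printing Implicit Defensive.
Import Order.TTheory GRing.Theory Num.Theory.
Import numFieldNormedType.Exports.
Local Open Scope classical_set_scope.
Local Open Scope ring_scope.

Section Defs.
Variable R : realType.

Definition dotc (k : nat) (x y : 'cV[R]_k) : R := (x^T *m y) 0 0.

Definition enorm (k : nat) (x : 'cV[R]_k) : R := Num.sqrt (dotc x x).

Definition symmetric (k : nat) (M : 'M[R]_k) : Prop := M^T = M.

Definition posdef (k : nat) (M : 'M[R]_k) : Prop :=
  symmetric M /\ forall x : 'cV[R]_k, x != 0 -> 0 < dotc x (M *m x).

Definition lambda_min (k : nat) (M : 'M[R]_k) : R := inf [set a : R | eigenvalue M a].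
Definition lambda_max (k : nat) (M : 'M[R]_k) : R := sup [set a : R | eigenvalue M a].

Definition gfun (k : nat) (phi : R) (Q : 'M[R]_k) (v : 'cV[R]_k) : R :=
  lambda_min (Q + phi *: (v *m v^T)).

(* Hurwitz: all (complex) eigenvalues, i.e. roots of the characteristic
   polynomial, have negative real part *)
Definition hurwitz (k : nat) (A : 'M[R]_k) : Prop :=
  forall z : complex R, root (map_poly (fun c : R => Complex c 0) (char_poly A)) z ->
    complex.Re z < 0.

Definition nondecreasing_on_nonneg (f : R -> R) : Prop :=
  forall x y : R, 0 <= x -> x <= y -> f x <= f y.

End Defs.

(* Main.v *)
Require Import Defs.
From HB Require Import structures.
From mathcomp Require Import all_boot all_order all_algebra.
From mathcomp Require Import all_classical all_reals all_analysis.
From mathcomp Require Import complex.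
From mathcomp Require Import ring lra.
Import Order.TTheory GRing.Theory Num.Theory.
Import numFieldNormedType.Exports.
Local Open Scope classical_set_scope.
Local Open Scope ring_scope.

Section LA.
Context {R : realType}.
Implicit Types (k : nat).
Lemma mul_self_ge0 (a : R) : 0 <= a * a.
Proof. by rewrite -expr2 sqr_ge0. Qed.

Lemma dotcE {k} (x y : 'cV[R]_k) : dotc x y = \sum_i x i 0 * y i 0.
Proof. by rewrite /dotc !mxE; apply: eq_bigr => i _; rewrite mxE. Qed.

Lemma dotcC {k} (x y : 'cV[R]_k) : dotc x y = dotc y x.
Proof. by rewrite !dotcE; apply: eq_bigr => i _; rewrite mulrC. Qed.

Lemma dotcDl {k} (x y z : 'cV[R]_k) : dotc (x + y) z = dotc x z + dotc y z.
Proof. by rewrite !dotcE -big_split; apply: eq_bigr => i _; rewrite mxE mulrDl. Qed.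

Lemma dotcDr {k} (x y z : 'cV[R]_k) : dotc z (x + y) = dotc z x + dotc z y.
Proof. by rewrite dotcC dotcDl !(dotcC z). Qed.

Lemma dotcZl {k} a (x z : 'cV[R]_k) : dotc (a *: x) z = a * dotc x z.
Proof. by rewrite !dotcE mulr_sumr; apply: eq_bigr => i _; rewrite mxE mulrA. Qed.

Lemma dotcZr {k} a (x z : 'cV[R]_k) : dotc z (a *: x) = a * dotc z x.
Proof. by rewrite dotcC dotcZl dotcC. Qed.

Lemma dotcNl {k} (x z : 'cV[R]_k) : dotc (- x) z = - dotc x z.
Proof. by rewrite -scaleN1r dotcZl mulN1r. Qed.

Lemma dotcNr {k} (x z : 'cV[R]_k) : dotc z (- x) = - dotc z x.
Proof. by rewrite -scaleN1r dotcZr mulN1r. Qed.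

Lemma dotcBl {k} (x y z : 'cV[R]_k) : dotc (x - y) z = dotc x z - dotc y z.
Proof. by rewrite dotcDl dotcNl. Qed.

Lemma dotcBr {k} (x y z : 'cV[R]_k) : dotc z (x - y) = dotc z x - dotc z y.
Proof. by rewrite dotcDr dotcNr. Qed.

Lemma dotc0r {k} (x : 'cV[R]_k) : dotc x 0 = 0.
Proof. by rewrite dotcE big1 // => i _; rewrite mxE mulr0. Qed.

Lemma dotc0l {k} (x : 'cV[R]_k) : dotc 0 x = 0.
Proof. by rewrite dotcC dotc0r. Qed.

Lemma dotc_ge0 {k} (x : 'cV[R]_k) : 0 <= dotc x x.
Proof. by rewrite dotcE; apply: sumr_ge0 => i _; rewrite mul_self_ge0. Qed.

Lemma coord_le {k} (x : 'cV[R]_k) i : x i 0 * x i 0 <= dotc x x.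
Proof.
rewrite dotcE (bigD1 i) //= lerDl; apply: sumr_ge0 => j _; exact: mul_self_ge0.
Qed.

Lemma dotc_eq0 {k} (x : 'cV[R]_k) : dotc x x = 0 -> x = 0.
Proof.
move=> h; apply/matrixP => i j; rewrite mxE (ord1 j).
have := coord_le x i; rewrite h => h1.
have : x i 0 * x i 0 = 0 by apply/eqP; rewrite eq_le h1 mul_self_ge0.
by move/eqP; rewrite mulf_eq0 orbb => /eqP.
Qed.

Lemma dotc_gt0 {k} {x : 'cV[R]_k} : x != 0 -> 0 < dotc x x.
Proof.
move=> xn0; rewrite lt_def dotc_ge0 andbT; apply/eqP => /dotc_eq0 h.
by rewrite h eqxx in xn0.
Qed.

Lemma dotc_mulmx {k} l (M : 'M[R]_(k, l)) x y : dotc x (M *m y) = dotc (M^T *m x) y.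
Proof. by rewrite /dotc trmx_mul trmxK mulmxA. Qed.

Lemma dotc_sym {k} (M : 'M[R]_k) x y : M^T = M -> dotc x (M *m y) = dotc (M *m x) y.
Proof. by move=> sM; rewrite dotc_mulmx sM. Qed.


Lemma dotc_CS {k} (x y : 'cV[R]_k) : dotc x y * dotc x y <= dotc x x * dotc y y.
Proof.
set a := dotc x x; set b := dotc x y; set c := dotc y y.
have h : 0 <= dotc (a *: y - b *: x) (a *: y - b *: x) by apply: dotc_ge0.
rewrite !dotcBl !dotcBr !dotcZl !dotcZr -/a -/c (dotcC y x) -/b in h.
have [a0|a0] := eqVneq a 0.
  have x0 : x = 0 by apply: dotc_eq0.
  by rewrite /b /a x0 !dotc0l !mul0r.
have ap : 0 < a by rewrite lt_def a0 dotc_ge0.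
have : 0 <= a * (a * c - b * b) by nra.
by rewrite pmulr_rge0 // subr_ge0 mulrC.
Qed.

Lemma mx_bound {k l} (M : 'M[R]_(k, l)) :
  exists c, 0 <= c /\ forall y, dotc (M *m y) (M *m y) <= c * dotc y y.
Proof.
pose r i : 'cV[R]_l := \col_j M i j.
exists (\sum_i dotc (r i) (r i)); split.
  by apply: sumr_ge0 => i _; apply: dotc_ge0.
move=> y; rewrite [X in X <= _]dotcE mulr_suml; apply: ler_sum => i _.
have -> : (M *m y) i 0 = dotc (r i) y.
  by rewrite dotcE mxE; apply: eq_bigr => j _; rewrite mxE.
exact: dotc_CS.
Qed.

Lemma quad_lb {k} (M : 'M[R]_k) :
  exists c, forall x, - c * dotc x x <= dotc x (M *m x).
Proof.
have [c [c0 hc]] := mx_bound M.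
exists ((1 + c) / 2) => x.
have h := dotc_ge0 (x + M *m x).
rewrite !dotcDl !dotcDr (dotcC (M *m x) x) in h.
have := hc x; nra.
Qed.


Lemma eigenvalue_unit {k} (M : 'M[R]_k) a :
  eigenvalue M a = ~~ (M - a%:M \in unitmx).
Proof. by rewrite /eigenvalue /eigenspace kermx_eq0 row_free_unit. Qed.

Lemma eigen_col {k} (M : 'M[R]_k) a : M^T = M -> eigenvalue M a ->
  exists2 x : 'cV[R]_k, x != 0 & M *m x = a *: x.
Proof.
move=> sM /eigenvalueP [v hv vn0]; exists v^T; first by rewrite trmx_eq0.
by rewrite -{1}sM -trmx_mul hv linearZ.
Qed.

Section Spectral.
Variables (k : nat) (M : 'M[R]_k).
Hypothesis kpos : (0 < k)%N.
Hypothesis sM : M^T = M.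

Let S := [set dotc x (M *m x) / dotc x x | x in [set x : 'cV[R]_k | x != 0]].

Let hasinf : has_inf S.
Proof.
split.
  pose o : 'cV[R]_k := const_mx 1.
  exists (dotc o (M *m o) / dotc o o).
  exists o => //=; apply/negP => /eqP/matrixP/(_ (Ordinal kpos) 0).
  by rewrite !mxE => /eqP; rewrite oner_eq0.
have [c hc] := quad_lb M.
exists (- c) => _ [x /= xn0 <-].
have xp := dotc_gt0 xn0.
by rewrite ler_pdivlMr // hc.
Qed.

Let m := inf S.

Let m_lb x : m * dotc x x <= dotc x (M *m x).
Proof.
have [->|xn0] := eqVneq x 0; first by rewrite mulmx0 !dotc0l mulr0.
have xp := dotc_gt0 xn0.
rewrite -ler_pdivlMr //; apply: ge_inf; first by case: hasinf.
by exists x.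
Qed.

Let m_adh eps : 0 < eps -> exists2 x, x != 0 & dotc x (M *m x) < (m + eps) * dotc x x.
Proof.
move=> ep; have [_ [x /= xn0 <-] h] := inf_adherent ep hasinf.
exists x => //; have xp := dotc_gt0 xn0.
by rewrite -ltr_pdivrMr.
Qed.

Let N : 'M[R]_k := M - m%:M.

Let NE (x : 'cV[R]_k) : N *m x = M *m x - m *: x.
Proof. by rewrite /N mulmxBl mul_scalar_mx. Qed.

Let sN : N^T = N.
Proof. by rewrite /N linearB /= sM tr_scalar_mx. Qed.

Let qN (x : 'cV[R]_k) : dotc x (N *m x) = dotc x (M *m x) - m * dotc x x.
Proof. by rewrite NE dotcBr dotcZr. Qed.

Let qN_ge0 (x : 'cV[R]_k) : 0 <= dotc x (N *m x).
Proof. by rewrite qN subr_ge0 m_lb. Qed.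

Lemma m_eigen : eigenvalue M m.
Proof.
rewrite eigenvalue_unit; apply/negP => Nu; rewrite -/N in Nu.
have [c1 [c10 hc1]] := mx_bound N.
have [c2 [c20 hc2]] := mx_bound (invmx N).
set C := (1 + c1) / 2.
have Cp : 0 < C by rewrite divr_gt0 // ltr_wpDr.
have qup y : dotc y (N *m y) <= C * dotc y y.
  have h := dotc_ge0 (y - N *m y).
  rewrite !dotcBl !dotcBr (dotcC (N *m y) y) in h.
  have := hc1 y; rewrite /C; nra.
have key x : dotc (N *m x) (N *m x) <= C * dotc x (N *m x).
  set t := C^-1.
  have h := qN_ge0 (x - t *: (N *m x)).
  rewrite mulmxBr !dotcBl !dotcBr -scalemxAr !dotcZl !dotcZr in h.
  rewrite (dotc_sym _ x (N *m x) sN) in h.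
  have hq := qup (N *m x).
  have tC : t * C = 1 by rewrite mulVf // gt_eqF.
  have tp : 0 < t by rewrite invr_gt0.
  have h2 : t * (t * dotc (N *m x) (N *m (N *m x))) <= t * dotc (N *m x) (N *m x).
    have : t * (t * dotc (N *m x) (N *m (N *m x))) <= t * (t * (C * dotc (N *m x) (N *m x))).
      by rewrite ler_wpM2l ?ler_wpM2l // ltW.
    by rewrite (mulrA t C) tC mul1r.
  have h3 : t * dotc (N *m x) (N *m x) <= dotc x (N *m x) by lra.
  by rewrite -(ler_pM2l tp) mulrA tC mul1r.
have xbound x : dotc x x <= c2 * C * dotc x (N *m x).
  have := hc2 (N *m x); rewrite mulKmx //.
  have := key x; have := dotc_ge0 (N *m x); nra.
set eps := (2 * (c2 * C + 1))^-1.
have ep : 0 < eps by rewrite invr_gt0 mulr_gt0 // ltr_wpDl // mulr_ge0 // ltW.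
have [x xn0 hx] := m_adh _ ep.
have xp := dotc_gt0 xn0.
have qx : dotc x (N *m x) < eps * dotc x x by rewrite qN; lra.
have := xbound x.
have e2 : eps * (2 * (c2 * C + 1)) = 1 by rewrite mulVf // mulf_neq0 // gt_eqF // ltr_wpDl // mulr_ge0 // ltW.
have c2C : 0 <= c2 * C by rewrite mulr_ge0 // ltW.
nra.
Qed.

Lemma eigen_ge a : eigenvalue M a -> m <= a.
Proof.
move=> /(eigen_col M a sM) [x xn0 hx].
have xp := dotc_gt0 xn0.
have := m_lb x; rewrite hx dotcZr.
by rewrite ler_pM2r.
Qed.

Lemma lambda_min_eq : lambda_min M = m.
Proof.
rewrite /lambda_min; apply/eqP; rewrite eq_le; apply/andP; split.
  by apply: ge_inf; [exists m => a; exact: eigen_ge | exact: m_eigen].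
by apply: lb_le_inf; [exists m; exact: m_eigen | move=> a; exact: eigen_ge].
Qed.

Lemma lambda_min_lb (x : 'cV[R]_k) : lambda_min M * dotc x x <= dotc x (M *m x).
Proof. by rewrite lambda_min_eq m_lb. Qed.

Lemma lambda_min_vec : exists2 x : 'cV[R]_k, x != 0 & M *m x = lambda_min M *: x.
Proof. by rewrite lambda_min_eq; apply: eigen_col sM m_eigen. Qed.

End Spectral.
Arguments lambda_min_lb {k M}.
Arguments lambda_min_vec {k M}.
Arguments lambda_min_eq {k M}.


Lemma lambda_max_opp {k} (M : 'M[R]_k) : lambda_max M = - lambda_min (- M).
Proof.
rewrite /lambda_max /lambda_min /inf opprK; congr sup.
apply/seteqP; split => a /=.
  move=> ha; exists (- a); last by rewrite opprK.
  apply/eigenvalueP; move/eigenvalueP: ha => [v hv vn0]; exists v => //.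
  by rewrite mulmxN hv scaleNr.
move=> [b hb <-]; apply/eigenvalueP; move/eigenvalueP: hb => [v hv vn0].
exists v => //; rewrite scaleNr -hv mulmxN opprK //.
Qed.

Lemma lambda_max_ub {k} (M : 'M[R]_k) (x : 'cV[R]_k) : (0 < k)%N -> M^T = M ->
  dotc x (M *m x) <= lambda_max M * dotc x x.
Proof.
move=> kp sM; rewrite lambda_max_opp.
have sM' : (- M)^T = - M by rewrite linearN /= sM.
have := lambda_min_lb kp sM' x.
set L := lambda_min (- M); rewrite mulNmx dotcNr => h; lra.
Qed.

Lemma lambda_min_gt0 {k} (M : 'M[R]_k) : (0 < k)%N -> M^T = M ->
  (forall x : 'cV[R]_k, x != 0 -> 0 < dotc x (M *m x)) -> 0 < lambda_min M.
Proof.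
move=> kp sM pd; have [x xn0 hx] := lambda_min_vec kp sM.
have := pd x xn0; rewrite hx dotcZr.
by rewrite pmulr_lgt0 // dotc_gt0.
Qed.

Lemma lambda_min_le_max {k} (M : 'M[R]_k) : (0 < k)%N -> M^T = M ->
  lambda_min M <= lambda_max M.
Proof.
move=> kp sM; have [x xn0 hx] := lambda_min_vec kp sM.
have := lambda_max_ub M x kp sM; rewrite hx dotcZr.
by rewrite ler_pM2r // dotc_gt0.
Qed.

End LA.
Section Der.
Context {R : realType}.

Lemma is_derive_coord {m n} (f : R -> 'M[R]_(m, n)) (t : R) df i j :
  is_derive t 1 f df -> is_derive t 1 (fun s => f s i j) (df i j).
Proof.
case=> dv dval.
have hq : (fun h : R => h^-1 *: ((f \o shift t) (h *: 1) - f t)) @ 0^' --> df.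
  by rewrite -dval; exact: dv.
have hc := continuous_cvg _ (@coord_continuous R m n i j df) hq.
have E : (fun h : R => h^-1 *: (((fun s => f s i j) \o shift t) (h *: 1) - f t i j)) =
  ((fun M : 'M[R]_(m, n) => M i j) \o (fun h : R => h^-1 *: ((f \o shift t) (h *: 1) - f t))).
  by apply: funext => h /=; rewrite !mxE.
apply: DeriveDef.
  rewrite /derivable E; apply/cvg_ex; exists (df i j); exact: hc.
by rewrite /derive E; apply/cvg_lim => //; exact: hc.
Qed.


Lemma is_derive_quad {k} (f : R -> 'cV[R]_k) (P : 'M[R]_k) (t : R) df :
  is_derive t 1 f df ->
  is_derive t 1 (fun s => dotc (f s) (P *m f s))
    (dotc (f t) (P *m df) + dotc df (P *m f t)).
Proof.
move=> hf.
pose c (j : 'I_k) : R -> R := fun s => f s j 0.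
have hc j : is_derive t 1 (c j) (df j 0) by apply: is_derive_coord.
pose S (i : 'I_k) : R -> R := \sum_(j < k) (P i j \*: c j).
have hS i : is_derive t 1 (S i) (\sum_(j < k) P i j *: df j 0).
  by apply: is_derive_sum => j; apply: is_deriveZ.
have hM i : is_derive t 1 (c i * S i) (c i t *: (\sum_(j < k) P i j *: df j 0) + S i t *: df i 0).
  exact: is_deriveM.
have hT := is_derive_sum hM.
have Sv i s : S i s = \sum_(j < k) P i j * f s j 0.
  by rewrite /S fct_sumE; apply: eq_bigr.
have -> : (fun s => dotc (f s) (P *m f s)) = \sum_(i < k) (c i * S i).
  apply: funext => s; rewrite fct_sumE dotcE; apply: eq_bigr => i _ /=.
  by change ((c i * S i) s) with (c i s * S i s); rewrite Sv mxE.
apply: is_derive_eq hT _.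
rewrite !dotcE -big_split /=; apply: eq_bigr => i _.
rewrite Sv /c !mxE /= mulrC; congr (_ + _).
  rewrite scaler_sumr mulr_suml; apply: eq_bigr => j _ /=.
  rewrite /GRing.scale /=. ring.
rewrite /GRing.scale /= mulrC; congr (_ * _).
Qed.

End Der.
Section ODE.
Context {R : realType}.

Lemma is_derive_expRk (k t : R) : is_derive t 1 (fun s => expR (k * s)) (k * expR (k * t)).
Proof.
have df : derivable (fun s : R => k * s) t 1.
  by apply/derivable1_diffP; apply: differentiableM.
have dg : derivable (@expR R) (k * t) 1 by apply: ex_derive.
have dc : derivable ((@expR R) \o (fun s : R => k * s)) t 1.
  apply/derivable1_diffP; apply: differentiable_comp; apply/derivable1_diffP => //.
have hD := derivableP dc.
have hk : is_derive t 1 ( *%R k) k.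
  have H := @is_deriveM _ _ (cst k) id t 1 0 1 (is_derive_cst _ _ _) (is_derive_id _ _).
  have E : (cst k * id : R -> R) = *%R k by apply: funext.
  rewrite E scaler0 addr0 in H.
  by apply: is_derive_eq H _; rewrite /GRing.scale /= mulr1.
have Dv : 'D_1 ((@expR R) \o (fun s : R => k * s)) t = k * expR (k * t).
  rewrite -derive1E (derive1_comp df dg) !derive1E.
  by rewrite [X in X * _]derive_val mulrC (@derive_val _ _ _ _ _ _ _ hk).
rewrite Dv in hD; exact: hD.
Qed.


Lemma ode_bound (V dV : R -> R) (k c L : R) : 0 < k -> c <= k * L ->
  (forall t : R, 0 < t -> is_derive t 1 V (dV t)) ->
  (forall t : R, 0 < t -> dV t <= - k * V t + c) ->
  forall eps, 0 < eps -> exists T, 0 <= T /\ forall t, T <= t -> V t <= L + eps.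
Proof.
move=> kp cL hV hdV eps ep.
pose E (s : R) := expR (k * s).
pose h (s : R) := (V s - L) * E s.
pose dh (s : R) := (V s - L) * (k * E s) + E s * dV s.
have hh (s : R) : 0 < s -> is_derive s 1 h (dh s).
  move=> sp.
  have H := @is_deriveM _ _ (V - cst L) E s 1 _ _ (is_deriveB (hV s sp) (is_derive_cst L s 1)) (is_derive_expRk k s).
  have Eq : ((V - cst L) * E : R -> R) = h by apply: funext.
  rewrite Eq subr0 in H; apply: is_derive_eq H _.
  by rewrite /dh /GRing.scale /=.
have dhle s : 0 < s -> dh s <= 0.
  move=> sp; have Ep : 0 < E s by apply: expR_gt0.
  have := hdV s sp; rewrite /dh => h1.
  have : dh s = E s * (k * (V s - L) + dV s) by rewrite /dh; ring.
  rewrite /dh => ->; rewrite pmulr_rle0 //; lra.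
have hmono t : 1 <= t -> h t <= h 1.
  move=> t1.
  have := @MVT_segment R h dh 1 t t1.
  case.
  - move=> x; rewrite in_itv /= => /andP[x1 _]; apply: hh; lra.
  - apply: derivable_within_continuous => x; rewrite in_itv /= => /andP[x1 _].
    by apply: (@ex_derive _ _ _ _ _ _ (dh x)); apply: hh; lra.
  move=> x; rewrite in_itv /= => /andP[x1 _] hx.
  have := dhle x ltac:(lra); have : 0 <= t - 1 by lra.
  move=> ha hb; nra.
set D := `|h 1|.
have D0 : 0 <= D by apply: normr_ge0.
exists (1 + D / (k * eps)); split.
  by rewrite addr_ge0 // divr_ge0 // mulr_ge0 // ltW.
move=> t tT.
have Dk : 0 <= D / (k * eps) by rewrite divr_ge0 // mulr_ge0 // ltW.
have t1 : 1 <= t by lra.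
have := hmono t t1; rewrite {1}/h => h1.
have hD : h 1 <= D by apply: ler_norm.
have Et : 1 + k * t <= E t by apply: expR_ge1Dx.
have Ep : 0 < E t by apply: expR_gt0.
have kte : D <= eps * (k * t).
  have : D / (k * eps) * (k * eps) = D by rewrite divfK // mulf_neq0 // gt_eqF.
  have ke : 0 < k * eps by rewrite mulr_gt0.
  move=> hq; have : D / (k * eps) * (k * eps) <= (t - 1) * (k * eps).
    by rewrite ler_pM2r //; lra.
  rewrite hq; nra.
have : (V t - L) * E t <= eps * E t by nra.
by rewrite ler_pM2r // lerBlDl addrC.
Qed.

End ODE.

Section Help.
Context {R : realType}.

Lemma outerE {k} (v x : 'cV[R]_k) : (v *m v^T) *m x = dotc v x *: v.
Proof.
rewrite -mulmxA.
have -> : v^T *m x = (dotc v x)%:M.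
  by apply/matrixP => i j; rewrite (ord1 i) (ord1 j) /dotc [RHS]mxE eqxx mulr1n.
by rewrite mul_mx_scalar.
Qed.

Lemma posdef_ge0 {k} (K : 'M[R]_k) (y : 'cV[R]_k) : posdef K -> 0 <= dotc y (K *m y).
Proof.
case=> _ pd; have [->|yn0] := eqVneq y 0; first by rewrite dotc0l.
exact/ltW/pd.
Qed.

Lemma posdef_unit {k} (K : 'M[R]_k) : posdef K -> K \in unitmx.
Proof.
move=> [sK pd].
have : ~~ eigenvalue K 0.
  apply/negP => /(eigen_col K 0 sK) [x xn0 hx].
  by have := pd x xn0; rewrite hx scale0r dotc0r ltxx.
rewrite eigenvalue_unit negbK.
have -> : (0 : R)%:M = 0 :> 'M[R]_k by apply/matrixP => i j; rewrite !mxE mul0rn.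
by rewrite subr0.
Qed.

Lemma cs_K {k} (K : 'M[R]_k) (W y : 'cV[R]_k) (a : R) : posdef K ->
  2 * a * dotc W y <= a ^+ 2 * dotc y (K *m y) + dotc W (invmx K *m W).
Proof.
move=> pK; have Ku := posdef_unit K pK; have sK : K^T = K by case: pK.
set z := invmx K *m W.
have Kz : K *m z = W by rewrite /z mulKVmx.
have h := posdef_ge0 K (a *: y - z) pK.
rewrite mulmxBr -scalemxAr Kz !dotcBl !dotcZl !dotcBr !dotcZr in h.
rewrite (dotc_sym K z y sK) Kz (dotcC y W) in h.
have -> : dotc W z = dotc z W by rewrite dotcC.
lra.
Qed.

End Help.
Section Aux.
Context {R : realType}.
Lemma aux1 (al s wb qx cW : R) :
  2 * (al * s) * wb <= (al * s) ^+ 2 * qx + cW -> al * (2 * s * wb) <= al * (al * (s * s) * qx) + cW.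
Proof. rewrite expr2; lra. Qed.
Lemma aux2 (et es : R) : `|et| <= es -> et * et <= es * es.
Proof.
move=> h; have : `|et| ^+ 2 = et ^+ 2 by rewrite real_normK // num_real.
rewrite !expr2 => <-; have := normr_ge0 et; nra.
Qed.
Lemma aux3 (a s et es : R) : et * et <= es * es ->
  a * (2 * s * et) <= a * (a * (s * s)) + es ^+ 2.
Proof. move=> h; have := sqr_ge0 (a * s - et); rewrite !expr2; nra. Qed.
End Aux.
Section Aux2.
Context {R : realType}.
Lemma aux4 (d xQ s qx wb et al bb a phi cWa eta2 g xx gV : R) :
  d = - xQ + 2 * s * (- al * s * qx + wb + et) ->
  2 * s * wb <= al * (s * s) * qx + cWa ->
  2 * s * et <= a * (s * s) + eta2 ->
  al * (s * s) * bb <= al * (s * s) * qx ->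
  g * xx <= xQ + phi * (s * s) ->
  gV <= g * xx ->
  phi * (s * s) = al * (s * s) * bb - a * (s * s) ->
  d <= - gV + (cWa + eta2).
Proof. move=> ->; lra. Qed.
Lemma aux5 (C mu g lM : R) : 0 < g -> 0 < lM -> 0 < mu ->
  C <= g / lM * (lM * (C + mu / 2) / g).
Proof.
move=> gp lp mp.
have -> : g / lM * (lM * (C + mu / 2) / g) = C + mu / 2.
  by field; rewrite !gt_eqF.
lra.
Qed.
Lemma aux6 (C mu g lM : R) : 0 < g ->
  lM * (C + mu / 2) / g + lM * mu / (2 * g) = lM / g * (C + mu).
Proof. by move=> gp; field; rewrite gt_eqF. Qed.
Lemma aux7 (lm lM g c xx Vt : R) : 0 < lm -> 0 < g ->
  lm * xx <= Vt -> Vt <= lM / g * c -> xx <= lM / (g * lm) * c.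
Proof.
move=> lp gp h1 h2; rewrite -(ler_pM2l lp).
have -> : lm * (lM / (g * lm) * c) = lM / g * c by field; rewrite !gt_eqF.
lra.
Qed.
Lemma aux_sqrt (a b d : R) : 0 <= a -> d <= a * b ->
  Num.sqrt d <= Num.sqrt a * Num.sqrt b.
Proof. by move=> a0 h; rewrite -sqrtrM //; apply: ler_wsqrtr. Qed.
Lemma aux8 (cW es al bb gm : R) : 0 < al -> 0 < bb -> gm < 1 ->
  (cW + es / (bb * (1 - gm))) / al = cW / al + es / (al * (1 - gm) * bb).
Proof. by move=> ap bp g1; field; rewrite !gt_eqF // subr_gt0. Qed.
End Aux2.
Arguments aux4 {R d xQ s qx wb et al bb a phi cWa eta2 g xx gV}.
Arguments aux7 {R lm lM g c xx Vt}.

Theorem mainTheorem4 (R : realType) (n nb : nat)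
  (A : 'M[R]_n) (B : 'cV[R]_n) (beta : 'cV[R]_n -> 'cV[R]_nb)
  (W : 'cV[R]_nb) (eta : R -> R) (e : R -> 'cV[R]_n)
  (P Q : 'M[R]_n) (Kb : 'M[R]_nb) (alpha etastar gamma mu : R) :
  hurwitz A ->
  (* Assumption 1 *)
  (exists alpha_beta : R -> R,
      nondecreasing_on_nonneg alpha_beta /\ (forall x, 0 <= x -> 0 <= alpha_beta x) /\
      forall x, enorm (beta x) <= alpha_beta (enorm x)) ->
  0 < alpha -> posdef Kb ->
  posdef P -> posdef Q -> Q = - (A^T *m P + P *m A) ->
  0 < inf (range (fun x : 'cV[R]_n => dotc (beta x) (Kb *m beta x))) ->
  (forall t, 0 <= t -> `|eta t| <= etastar) ->
  0 <= gamma -> gamma < 1 -> 0 < mu ->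
  (* e is a closed-loop solution on [0, oo) with
     u_adapt = - What^T beta(e),  What = K beta(e) B^T P e,  K = alpha Kb *)
  (forall t, 0 < t ->
     let What := (alpha *: Kb) *m beta (e t) *m (B^T *m P *m e t) in
     let u := - dotc What (beta (e t)) in
     is_derive t 1 e (A *m e t + (u + dotc W (beta (e t)) + eta t) *: B)) ->
  let bb := inf (range (fun x : 'cV[R]_n => dotc (beta x) (Kb *m beta x))) in
  let re := Num.sqrt (lambda_max P /
                       (gfun (alpha * bb * gamma) Q (P *m B) * lambda_min P)) *
            Num.sqrt ((dotc W (invmx Kb *m W) + etastar ^+ 2 / (bb * (1 - gamma)))
                        / alpha + mu) in
  exists Te : R, 0 <= Te /\ forall t, Te <= t -> enorm (e t) <= re.
Proof.
move=> _ _ alpha0 pKb pP pQ Qdef Hb Heta g0 g1 mu0 Hode bb re.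
have sP : P^T = P by case: pP.
have sQ : Q^T = Q by case: pQ.
have sKb : Kb^T = Kb by case: pKb.
have [n0|npos] := posnP n.
  exists 0; split => // t _.
  have -> : enorm (e t) = 0.
    rewrite /enorm (_ : dotc _ _ = 0) ?sqrtr0 //.
    by rewrite dotcE big1 // => -[i hi]; exfalso; move: hi; rewrite n0.
  by rewrite /re mulr_ge0 // sqrtr_ge0.
pose q x := dotc (beta x) (Kb *m beta x).
have bb_le x : bb <= q x.
  apply: ge_inf; last by exists x.
  by exists 0 => _ [y _ <-]; apply: posdef_ge0.
have bb0 : 0 < bb by [].
pose phi := alpha * bb * gamma.
have phi0 : 0 <= phi by rewrite /phi mulr_ge0 // mulr_ge0 // ltW.
pose v := P *m B.
pose G := Q + phi *: (v *m v^T).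
have sG : G^T = G by rewrite /G linearD linearZ /= trmx_mul trmxK sQ.
have Gq x : dotc x (G *m x) = dotc x (Q *m x) + phi * (dotc v x * dotc v x).
  by rewrite /G mulmxDl -scalemxAl outerE dotcDr !dotcZr (dotcC x v).
have pG x : x != 0 -> 0 < dotc x (G *m x).
  move=> xn0; rewrite Gq; apply: ltr_wpDr; first by rewrite mulr_ge0 // mul_self_ge0.
  by case: pQ => _; apply.
have gpos : 0 < gfun phi Q v by apply: (lambda_min_gt0 G npos sG pG).
have lPpos : 0 < lambda_min P by apply: (lambda_min_gt0 P npos sP); case: pP.
have lPM : lambda_min P <= lambda_max P by apply: lambda_min_le_max.
have lMpos : 0 < lambda_max P by apply: (Order.POrderTheory.lt_le_trans lPpos lPM).
set g := gfun phi Q v.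
set lM := lambda_max P.
set lm := lambda_min P.
set cW := dotc W (invmx Kb *m W).
set C := (cW + etastar ^+ 2 / (bb * (1 - gamma))) / alpha.
pose w (s : R) := - dotc ((alpha *: Kb) *m beta (e s) *m (B^T *m P *m e s)) (beta (e s))
   + dotc W (beta (e s)) + eta s.
pose ed (s : R) := A *m e s + w s *: B.
pose V (s : R) := dotc (e s) (P *m e s).
pose dV (s : R) := dotc (e s) (P *m ed s) + dotc (ed s) (P *m e s).
have hV (t : R) : 0 < t -> is_derive t 1 V (dV t).
  by move=> tp; apply: is_derive_quad; exact: (Hode t tp).
have hdV (t : R) : 0 < t -> dV t <= - (g / lM) * V t + C.
  move=> tp.
  set x := e t.
  set s := dotc v x.
  have e1 : dotc (ed t) (P *m x) = dotc x (P *m ed t).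
    by rewrite (dotc_sym P (ed t) x sP) dotcC.
  have e2 : dotc x (P *m ed t) = dotc x (P *m (A *m x)) + w t * s.
    by rewrite /ed mulmxDr -scalemxAr dotcDr dotcZr /s /v (dotcC (P *m B) x).
  have e3 : dotc x (Q *m x) = - 2 * dotc x (P *m (A *m x)).
    rewrite Qdef mulNmx mulmxDl dotcNr dotcDr -!mulmxA.
    rewrite (dotc_mulmx _ A^T) trmxK dotcC -(dotc_sym P x (A *m x) sP); ring.
  have e4 : B^T *m P *m x = s%:M.
    apply/matrixP => i j; rewrite (ord1 i) (ord1 j) [RHS]mxE eqxx mulr1n.
    by rewrite -mulmxA /s /v -/(dotc B (P *m x)) dotc_mulmx sP dotcC.
  have e5 : w t = - alpha * s * q x + dotc W (beta x) + eta t.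
    rewrite /w -/x e4 mul_mx_scalar -scalemxAl dotcZl dotcZl /q dotcC; ring.
  have dVE : dV t = - dotc x (Q *m x) + 2 * s * (- alpha * s * q x + dotc W (beta x) + eta t).
    rewrite /dV -/x e1 e2 e3 e5; ring.
  have q0 : bb <= q x := bb_le x.
  set qx := q x in dVE q0.
  set wb := dotc W (beta x) in dVE.
  set et := eta t in dVE.
  have B1 : 2 * s * wb <= alpha * (s * s) * qx + cW / alpha.
    have h := cs_K Kb W (beta x) (alpha * s) pKb.
    rewrite -/wb -/cW -/(q x) -/qx in h.
    rewrite -(ler_pM2l alpha0) mulrDr (mulrC alpha (cW / alpha)) divfK ?gt_eqF //.
    exact: aux1.
  set a := alpha * (1 - gamma) * bb.
  have ap : 0 < a by rewrite /a !mulr_gt0 // subr_gt0.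
  have et2 : et * et <= etastar * etastar.
    exact: aux2 (Heta t (ltW tp)).
  have B2 : 2 * s * et <= a * (s * s) + etastar ^+ 2 / a.
    rewrite -(ler_pM2l ap) mulrDr (mulrC a (_ / a)) divfK ?gt_eqF //.
    exact: aux3.
  have B3 : alpha * (s * s) * bb <= alpha * (s * s) * qx.
    by rewrite ler_wpM2l // mulr_ge0 // ?mul_self_ge0 // ltW.
  have FG : g * dotc x x <= dotc x (Q *m x) + phi * (s * s).
    rewrite -Gq /g /gfun. exact: (@lambda_min_lb _ _ G npos sG x).
  have FV : V t <= lM * dotc x x by exact: (lambda_max_ub P x npos sP).
  have FV2 : g / lM * V t <= g * dotc x x.
    have -> : g / lM * V t = g * (V t / lM) by rewrite mulrAC -mulrA.
    rewrite ler_pM2l // ler_pdivrMr // mulrC //.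
  have CE : C = cW / alpha + etastar ^+ 2 / a by rewrite /C /a; apply: aux8.
  rewrite CE (mulNr (g / lM)).
  apply: (aux4 dVE B1 B2 B3 FG FV2).
  by rewrite /phi /a; ring.
have cL : C <= g / lM * (lM * (C + mu / 2) / g) by apply: aux5.
have ep : 0 < lM * mu / (2 * g) by rewrite !divr_gt0 // ?mulr_gt0.
have [T [T0 HT]] := ode_bound _ _ _ _ _ (divr_gt0 gpos lMpos) cL hV hdV _ ep.
exists T; split => // t tT.
have HV := HT t tT; rewrite aux6 // in HV.
have Hm : lm * dotc (e t) (e t) <= V t by exact: (@lambda_min_lb _ _ P npos sP (e t)).
have Hx := aux7 lPpos gpos Hm HV.
apply: aux_sqrt Hx.
by rewrite divr_ge0 // ?mulr_ge0 // ltW.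
Qed.
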